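(* For every positive integer $n$, $$\iota(2^n-1)\leq 2n-1-\left\lfloor \frac{n-1}{2^{\lfloor \frac{\log n}{\log 2}\rfloor}}\right\rfloor-\left\lfloor \frac{\log n}{\log 2}\right\rfloor+\iota(n).$$
   Context: An addition chain producing $N$ is a sequence $1,2,s_3,\ldots,s_k=N$ in which every term after the first is the sum of two (not necessarily distinct) earlier terms; its length is the number of terms excluding the initial $1$. $\iota(N)$ denotes the length of the shortest addition chain producing $N$. $\lfloor\cdot\rfloor$ is the floor function and $\log$ the natural logarithm. *)

(* Defs.v *)
From mathcomp Require Import all_boot.
Set Implicit Arguments. Unset Strict Implicit. Unset Printing Implicit Defensive.

(* An addition chain is represented by the list c = [:: s_1; ...; s_k] of the
   terms AFTER the initial 1; the full chain is 1 :: c.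
   Its length is size c (number of terms excluding the initial 1). *)
Definition is_addition_chain (c : seq nat) : bool :=
  let s := 1 :: c in
  [forall i : 'I_(size s), (0 < i) ==>
     [exists j : 'I_i, exists k : 'I_i, nth 0 s i == nth 0 s j + nth 0 s k]].

Definition chain_for (N : nat) (c : seq nat) : Prop :=
  is_addition_chain c /\ last 1 c = N.

Definition is_iota (N m : nat) : Prop :=
  (exists c, chain_for N c /\ size c = m) /\
  (forall c, chain_for N c -> m <= size c).

(* Main.v *)
Require Import Defs.
From mathcomp Require Import all_boot.
From mathcomp Require Import zify.

Lemma chain_ext c y z : is_addition_chain c -> y \in 1 :: c -> z \in 1 :: c ->
  is_addition_chain (rcons c (y + z)).
Proof.
move=> /forallP H hy hz; apply/forallP => -[i hi]; apply/implyP => /= i0.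
have Es : 1 :: rcons c (y + z) = rcons (1 :: c) (y + z) by [].
move: hi; rewrite Es size_rcons ltnS leq_eqVlt => /orP [/eqP ei | hi].
  subst i.
  have hyi : index y (1 :: c) < size (1 :: c) by rewrite index_mem.
  have hzi : index z (1 :: c) < size (1 :: c) by rewrite index_mem.
  apply/existsP; exists (Ordinal hyi); apply/existsP; exists (Ordinal hzi).
  rewrite !nth_rcons /= ltnn eqxx /= hyi hzi !nth_index //.
have := implyP (H (Ordinal hi)) i0 => /existsP [j /existsP [k /eqP E]].
apply/existsP; exists j; apply/existsP; exists k.
rewrite !nth_rcons hi (ltn_trans (ltn_ord j) hi) (ltn_trans (ltn_ord k) hi).
by rewrite E.
Qed.

Lemma chain_bound c : is_addition_chain c ->
  forall i, i < size (1 :: c) -> nth 0 (1 :: c) i <= 2 ^ i.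
Proof.
move=> /forallP H; elim/ltn_ind => i IH hi.
case: i IH hi => [|i] IH hi; first by [].
have := implyP (H (Ordinal hi)) isT => /existsP [j /existsP [k /eqP E]].
rewrite E expnS mul2n -addnn.
have hj := ltn_ord j; have hk := ltn_ord k.
apply: leq_add.
  apply: leq_trans (IH _ hj (ltn_trans hj hi)) _; rewrite leq_exp2l //.
apply: leq_trans (IH _ hk (ltn_trans hk hi)) _; rewrite leq_exp2l //.
Qed.

Lemma last_bound c : is_addition_chain c -> last 1 c <= 2 ^ size c.
Proof.
move=> H; have -> : last 1 c = nth 0 (1 :: c) (size c).
  by rewrite -[size c]/((size (1 :: c)).-1) nth_last.
by apply: chain_bound.
Qed.

Fixpoint f k : seq nat := match k with
  | 0 => [::]
  | k.+1 => rcons (rcons (f k) (2 ^ k.+2 - 2)) (2 ^ k.+2 - 1) end.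

Lemma f_ok k : is_addition_chain (f k) /\ last 1 (f k) = 2 ^ k.+1 - 1 /\ size (f k) = 2 * k.
Proof.
elim: k => [|k [H1 [H2 H3]]]; first by split; [apply/forallP => -[[|i] hi] | ].
have hp : 0 < 2 ^ k.+1 by rewrite expn_gt0.
have l1 : last 1 (f k) \in 1 :: f k by rewrite mem_last.
have e1 : 2 ^ k.+2 - 2 = last 1 (f k) + last 1 (f k).
  by rewrite H2 expnS; lia.
have c1 : is_addition_chain (rcons (f k) (2 ^ k.+2 - 2)).
  by rewrite e1; apply: chain_ext.
have e2 : 2 ^ k.+2 - 1 = 1 + last 1 (rcons (f k) (2 ^ k.+2 - 2)).
  by rewrite last_rcons expnS; lia.
split; last split.
- rewrite /= e2; apply: chain_ext => //; last by rewrite mem_last.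
- by rewrite /= last_rcons.
- by rewrite /= !size_rcons H3; lia.
Qed.

(* floor(log n / log 2) is trunc_log 2 n (largest e with 2^e <= n). *)
Theorem mainTheorem12 (n a b : nat) :
  0 < n -> is_iota (2 ^ n - 1) a -> is_iota n b ->
  a <= 2 * n - 1 - (n - 1) %/ 2 ^ (trunc_log 2 n) - trunc_log 2 n + b.
Proof.
move=> n0 [_ Ha] [[c [[Hc Hl] Hs]] _].
have [F1 [F2 F3]] := f_ok n.-1.
have ha : a <= 2 * n.-1.
  rewrite -F3; apply: Ha; split => //; rewrite F2; congr (2 ^ _ - 1); lia.
have hnb : n <= 2 ^ b by rewrite -Hl -Hs; apply: last_bound.
set m := trunc_log 2 n.
have hm1 : 2 ^ m <= n by apply: trunc_logP.
have hm2 : n < 2 ^ m.+1 by apply: trunc_log_ltn.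
have hmm : m < 2 ^ m by apply: ltn_expl.
have hp : 0 < 2 ^ m by rewrite expn_gt0.
set q := (n - 1) %/ 2 ^ m.
have hq : q + m <= b.
  case: (ltngtP (2 ^ m) n) => [lt||eq]; last first.
  - have -> : q = 0 by rewrite /q divn_small; lia.
    by rewrite add0n -(leq_exp2l _ _ (isT : 1 < 2)) eq.
  - by lia.
  have q1 : q <= 1.
    rewrite /q -ltnS ltn_divLR //; rewrite expnS in hm2; lia.
  have : m < b by rewrite -(ltn_exp2l _ _ (isT : 1 < 2)); lia.
  lia.
lia.
Qed.
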